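(* Assume $b_1<n^*$, $b_2<m^*$ and $n^*=m^*$. Then for every minimum set cover $S^{\min}$ and every maximum set packing $T^{\max}$, $(\sigma^1(S^{\min},b_1),\sigma^2(T^{\max},b_2))$ is a Nash equilibrium of $\Gamma(b_1,b_2)$, and every Nash equilibrium $(\sigma^{1*},\sigma^{2*})$ satisfies $U_1(\sigma^{1*},\sigma^{2*})=\frac{b_1b_2}{n^*}$, $U_2(\sigma^{1*},\sigma^{2*})=b_2(1-\frac{b_1}{n^*})$ and $r(\sigma^{1*},\sigma^{2*})=\frac{b_1}{n^*}$.
   Context: Detection model: finite nonempty sets $\mathcal V$, $\mathcal E$, monitoring sets $\mathcal C_i\subseteq\mathcal E$ ($i\in\mathcal V$) with every $e\in\mathcal E$ in some $\mathcal C_i$; $\mathcal C_S=\bigcup_{i\in S}\mathcal C_i$; $F(S,T)=|\mathcal C_S\cap T|$. Set cover: $S\subseteq\mathcal V$ with $\mathcal C_S=\mathcal E$; $n^*$ = minimum size of a set cover; a minimum set cover is a set cover of size $n^*$. Set packing: $T\subseteq\mathcal E$ with $|\mathcal C_i\cap T|\le1$ for all $i$; $m^*$ = maximum size of a set packing; a maximum set packing is one of size $m^*$. Game $\Gamma(b_1,b_2)$ ($b_1,b_2$ positive integers): $\mathcal A_1=\{S\subseteq\mathcal V:|S|\le b_1\}$, $\mathcal A_2=\{T\subseteq\mathcal E:|T|\le b_2\}$; mixed strategies $\sigma^1\in\Delta(\mathcal A_1)$, $\sigma^2\in\Delta(\mathcal A_2)$ (independent); payoffs $U_1=\mathbb E[F(S,T)]$,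 $U_2=\mathbb E[|T|]-\mathbb E[F(S,T)]$; Nash equilibrium as usual. Expected detection rate $r(\sigma)=\mathbb E[F(S,T)/|T|]$. Cyclic strategies: for $S=\{i_1,\dots,i_n\}$ with $n\ge b_1$, $S^k=\{i_k,\dots,i_{k+b_1-1}\}$ (indices cyclic mod $n$), $k=1,\dots,n$, and $\sigma^1(S,b_1)$ puts probability $1/n$ on each $S^k$; for $T=\{e_1,\dots,e_m\}$ with $m\ge b_2$, $T^l=\{e_l,\dots,e_{l+b_2-1}\}$ cyclically and $\sigma^2(T,b_2)$ puts probability $1/m$ on each $T^l$. *)

(* Defs.v *)
From HB Require Import structures.
From mathcomp Require Import all_boot all_order all_algebra.
Set Implicit Arguments. Unset Strict Implicit. Unset Printing Implicit Defensive.
Import Order.TTheory GRing.Theory Num.Theory.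

Section Detection.
Variables (V E : finType) (C : V -> {set E}).

Definition CS (S : {set V}) : {set E} := \bigcup_(i in S) C i.

Definition F (S : {set V}) (T : {set E}) : nat := #|CS S :&: T|.

Definition is_cover (S : {set V}) : bool := CS S == [set: E].

Definition is_packing (T : {set E}) : bool := [forall i, #|C i :&: T| <= 1].

Definition nstar : nat := \big[minn/#|V|]_(S : {set V} | is_cover S) #|S|.

Definition mstar : nat := \max_(T : {set E} | is_packing T) #|T|.

Definition min_cover (S : {set V}) : Prop := is_cover S /\ #|S| = nstar.
Definition max_packing (T : {set E}) : Prop := is_packing T /\ #|T| = mstar.

End Detection.

Section Game.
Variable R : realFieldType.
Local Open Scope ring_scope.

(* A mixed strategy over {A : {set X} | #|A| <= b}, represented as a
   probability mass function on {set X} vanishing outside the action set. *)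
Definition is_mixed (X : finType) (b : nat) (sigma : {set X} -> R) : Prop :=
  (forall A : {set X}, 0 <= sigma A) /\ (forall A : {set X}, (b < #|A|)%N -> sigma A = 0) /\
  \sum_(A : {set X}) sigma A = 1.

Variables (V E : finType) (C : V -> {set E}).

Definition U1 (s1 : {set V} -> R) (s2 : {set E} -> R) : R :=
  \sum_(S : {set V}) \sum_(T : {set E}) s1 S * s2 T * (F C S T)%:R.

Definition U2 (s1 : {set V} -> R) (s2 : {set E} -> R) : R :=
  \sum_(S : {set V}) \sum_(T : {set E}) s1 S * s2 T * (#|T|%:R - (F C S T)%:R).

(* expected detection rate; F/|T| with the convention x/0 = 0 *)
Definition rate (s1 : {set V} -> R) (s2 : {set E} -> R) : R :=
  \sum_(S : {set V}) \sum_(T : {set E}) s1 S * s2 T * ((F C S T)%:R / #|T|%:R).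

Definition is_NE (b1 b2 : nat) (s1 : {set V} -> R) (s2 : {set E} -> R) : Prop :=
  [/\ is_mixed b1 s1, is_mixed b2 s2,
      (forall t1, is_mixed b1 t1 -> U1 t1 s2 <= U1 s1 s2) &
      (forall t2, is_mixed b2 t2 -> U2 s1 t2 <= U2 s1 s2)].

End Game.

(* Cyclic strategy: for the enumeration s = [:: x_1; ...; x_n] (n >= b),
   the k-th window is {x_k, ..., x_(k+b-1)} (cyclically), i.e. the first b
   elements of s rotated by k; each of the n windows gets probability 1/n. *)
Definition window (X : finType) (s : seq X) (b k : nat) : {set X} :=
  [set x in take b (rot k s)].

Definition cyc_strat (R : realFieldType) (X : finType) (s : seq X) (b : nat)
  (A : {set X}) : R :=
  (\sum_(k < size s) ((window s b k == A)%:R : R)) / (size s)%:R.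

(* Main.v *)
Require Import Defs.
From HB Require Import structures.
From mathcomp Require Import all_boot all_order all_algebra.
From mathcomp Require Import zify ring lra.
Import Order.TTheory GRing.Theory Num.Theory.

Lemma index_rot (X : eqType) (s : seq X) x k : uniq s -> x \in s -> (k < size s)%N ->
  index x (rot k s) = if (k <= index x s)%N then (index x s - k)%N else (size s - k + index x s)%N.
Proof.
move=> us xs ks.
have us' := us; rewrite -[s](cat_take_drop k) cat_uniq in us'.
case/and3P: us' => _ hd _.
have szt : size (take k s) = k by rewrite size_takel // ltnW.
have ids : index x s = index x (take k s ++ drop k s) by rewrite cat_take_drop.
rewrite /rot ids [index x (take k s ++ _)]index_cat szt.
case xt: (x \in take k s).
- have xd : x \notin drop k s.
    by apply/negP => xd; move/hasPn: hd => /(_ x xd); rewrite xt.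
  rewrite index_cat (negbTE xd) size_drop.
  have : (index x (take k s) < k)%N by rewrite -[X in (_ < X)%N]szt index_mem.
  move=> h; rewrite leqNgt h /=; lia.
- have xd : x \in drop k s.
    by move: xs; rewrite -{1}(cat_take_drop k s) mem_cat xt.
  rewrite index_cat xd leq_addr; lia.
Qed.

Lemma mem_window (X : finType) (s : seq X) b k x : uniq s -> x \in s -> (k < size s)%N ->
  (x \in window s b k) = ((if (k <= index x s)%N then (index x s - k)%N else (size s - k + index x s)%N) < b)%N.
Proof.
move=> us xs ks; rewrite /window inE in_take ?mem_rot //.
by rewrite index_rot.
Qed.

Lemma window_sub (X : finType) (s : seq X) b k x : x \in window s b k -> x \in s.
Proof. by rewrite /window inE => /mem_take; rewrite mem_rot. Qed.

Lemma count_window (X : finType) (s : seq X) b x : uniq s -> x \in s -> (b <= size s)%N ->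
  (\sum_(k < size s) (x \in window s b k) = b)%N.
Proof.
move=> us xs bs.
set n := size s; set p := index x s.
have pn : (p < n)%N by rewrite index_mem.
pose g (k : nat) := if (k <= p)%N then (p - k)%N else (n - k + p)%N.
have gn : forall k : 'I_n, (g k < n)%N.
  move=> k; have := ltn_ord k; rewrite /g; case: ifP => kp; lia.
pose h (k : 'I_n) : 'I_n := Ordinal (gn k).
have hinv : forall k, h (h k) = k.
  move=> k; apply: val_inj => /=; have := ltn_ord k; rewrite /g.
  case: (leqP k p) => kp /=.
  - have -> : (p - k <= p)%N by lia. lia.
  - move=> kn; have -> : (n - k + p <= p)%N = false by lia. lia.
have hinj : injective h by apply: (can_inj hinv).
transitivity (\sum_(k < n) (nat_of_ord (h k) < b))%N.
  by apply: eq_bigr => k _; rewrite mem_window.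
transitivity (\sum_(k < n) nat_of_bool (nat_of_ord k < b)%N).
  by symmetry; apply: (reindex_inj hinj).
rewrite -(big_mkord xpredT (fun k => nat_of_bool (k < b)%N)).
rewrite (@big_cat_nat _ _ _ b 0 n) //=.
rewrite (eq_big_nat _ _ (F2 := fun _ => 1%N)); last by move=> i /andP[_ ->].
rewrite [X in (_ + X)%N](eq_big_nat _ _ (F2 := fun _ => 0%N)); last first.
  by move=> i /andP[h1 _]; rewrite ltnNge h1.
by rewrite sum_nat_const_nat big1 // muln1 subn0 addn0.
Qed.

Lemma card_window_le (X : finType) (s : seq X) b k : (#|window s b k| <= b)%N.
Proof.
rewrite /window cardsE; apply: leq_trans (card_size _) _.
by rewrite size_take_min geq_minl.
Qed.

Lemma card_window (X : finType) (s : seq X) b k : uniq s -> (b <= size s)%N -> #|window s b k| = b.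
Proof.
move=> us bs; rewrite /window cardsE.
have /card_uniqP -> : uniq (take b (rot k s)) by rewrite take_uniq // rot_uniq.
by rewrite size_takel // size_rot.
Qed.

Lemma card_setI_sum (X : finType) (A B : {set X}) : #|A :&: B| = (\sum_(e in A) (e \in B))%N.
Proof.
rewrite -sum1_card big_mkcond [RHS]big_mkcond /=; apply: eq_bigr => e _.
by rewrite !inE; case: (e \in A); case: (e \in B).
Qed.

Lemma card_bigcup_le (I X : finType) (P : pred I) (G : I -> {set X}) :
  (#|\bigcup_(i | P i) G i| <= \sum_(i | P i) #|G i|)%N.
Proof.
apply: (big_ind2 (fun (A : {set X}) (k : nat) => #|A| <= k)%N).
- by rewrite cards0.
- move=> A1 k1 A2 k2 h1 h2; apply: leq_trans (leq_card_setU A1 A2) _.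
  exact: leq_add.
- by [].
Qed.

Lemma packing_bound (V E : finType) (C : V -> {set E}) (S : {set V}) (T : {set E}) :
  (forall i, #|C i :&: T| <= 1)%N -> (#|CS C S :&: T| <= #|S|)%N.
Proof.
move=> hp.
have sub : CS C S :&: T \subset \bigcup_(i in S) (C i :&: T).
  apply/subsetP => e; rewrite inE => /andP[/bigcupP[i iS ei] eT].
  by apply/bigcupP; exists i => //; rewrite inE ei eT.
apply: leq_trans (subset_leq_card sub) _.
apply: leq_trans (card_bigcup_le _ _ (fun i => i \in S) (fun i => C i :&: T)) _.
rewrite -sum1_card; exact: leq_sum.
Qed.

Lemma upper_sum (V E : finType) (C : V -> {set E}) (S : {set V}) (t : seq E) b :
  uniq t -> (b <= size t)%N -> (forall i, #|C i :&: [set x in t]| <= 1)%N ->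
  (\sum_(l < size t) F C S (window t b l) <= b * #|S|)%N.
Proof.
move=> ut bt hp.
rewrite /F.
under eq_bigr => l _ do rewrite card_setI_sum.
rewrite exchange_big /=.
apply: (@leq_trans (\sum_(e in CS C S) b * (e \in [set x in t]))%N).
  apply: leq_sum => e _.
  case et: (e \in t).
    by rewrite inE et muln1 count_window.
  rewrite big1 // => l _.
  by apply/eqP; rewrite eqb0; apply/negP => /window_sub; rewrite et.
rewrite -big_distrr /= -card_setI_sum leq_mul2l.
by rewrite packing_bound ?orbT.
Qed.

Lemma lower_sum (V E : finType) (C : V -> {set E}) (T : {set E}) (s : seq V) b :
  uniq s -> (b <= size s)%N -> (forall e, exists2 i, i \in s & e \in C i) ->
  (b * #|T| <= \sum_(k < size s) F C (window s b k) T)%N.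
Proof.
move=> us bs hc.
rewrite /F.
under eq_bigr => k _ do rewrite setIC card_setI_sum.
rewrite exchange_big /= mulnC -sum_nat_const.
apply: leq_sum => e _.
have [i iS ei] := hc e.
rewrite -{1}(count_window _ _ b _ us iS bs).
apply: leq_sum => k _.
case iw: (i \in window s b k) => //=.
have -> : e \in CS C (window s b k) by apply/bigcupP; exists i.
by [].
Qed.

Set Implicit Arguments. Unset Strict Implicit.
Local Open Scope ring_scope.

Section Real.
Variable R : realFieldType.

Lemma cycE (X : finType) (s : seq X) b (g : {set X} -> R) :
  \sum_A cyc_strat R s b A * g A = (\sum_(k < size s) g (window s b k)) / (size s)%:R.
Proof.
rewrite /cyc_strat.
under eq_bigr => A _ do rewrite mulrAC.
rewrite -mulr_suml; congr (_ / _).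
under eq_bigr => A _ do rewrite mulr_suml.
rewrite exchange_big /=; apply: eq_bigr => k _.
rewrite (bigD1 (window s b k)) //= eqxx mul1r big1 ?addr0 // => A hA.
by rewrite eq_sym (negbTE hA) mul0r.
Qed.

Lemma cyc_mixed (X : finType) (s : seq X) b : (0 < size s)%N -> is_mixed b (cyc_strat R s b).
Proof.
move=> sp; split; [|split].
- move=> A; rewrite /cyc_strat; apply: divr_ge0; last exact: ler0n.
  by apply: sumr_ge0 => k _; exact: ler0n.
- move=> A hA; rewrite /cyc_strat big1 ?mul0r // => k _.
  case: eqP => // hw; move: hA; rewrite -hw ltnNge card_window_le //.
- under eq_bigr => A _ do rewrite -[cyc_strat _ _ _ _]mulr1.
  rewrite cycE sumr_const card_ord divff //.
  by rewrite -[_ *+ _]mulr_natl mulr1 pnatr_eq0 -lt0n.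
Qed.

Lemma cyc_ET (X : finType) (s : seq X) b : uniq s -> (b <= size s)%N -> (0 < size s)%N ->
  \sum_A cyc_strat R s b A * (#|A|)%:R = b%:R.
Proof.
move=> us bs sp; rewrite cycE.
under eq_bigr => k _ do rewrite card_window //.
rewrite sumr_const card_ord -[_ *+ size s]mulr_natr mulfK //.
by rewrite pnatr_eq0 -lt0n.
Qed.

Lemma mixed_le (X : finType) b (t : {set X} -> R) (v : {set X} -> R) (c : R) :
  is_mixed b t -> (forall A : {set X}, (#|A| <= b)%N -> v A <= c) -> \sum_A t A * v A <= c.
Proof.
move=> [t0 [tz t1]] hv.
apply: (@le_trans _ _ (\sum_A t A * c)).
  apply: ler_sum => A _; case: (leqP #|A| b) => hA.
    by apply: ler_wpM2l => //; exact: hv.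
  by rewrite tz // !mul0r.
by rewrite -mulr_suml t1 mul1r.
Qed.

Lemma mixed_ge (X : finType) b (t : {set X} -> R) (v : {set X} -> R) (c : R) :
  is_mixed b t -> (forall A : {set X}, (#|A| <= b)%N -> c <= v A) -> c <= \sum_A t A * v A.
Proof.
move=> ht hv; rewrite -[c]opprK -lerN2 opprK -sumrN.
under eq_bigr => A _ do rewrite -mulrN.
apply: mixed_le ht _ => A hA; rewrite lerN2; exact: hv.
Qed.

Variables (V E : finType) (C : V -> {set E}).

Lemma U1_l (s1 : {set V} -> R) (s2 : {set E} -> R) : U1 C s1 s2 = \sum_S s1 S * (\sum_T s2 T * (F C S T)%:R).
Proof.
by apply: eq_bigr => S _; rewrite mulr_sumr; apply: eq_bigr => T _; rewrite mulrA.
Qed.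

Lemma U1_r (s1 : {set V} -> R) (s2 : {set E} -> R) : U1 C s1 s2 = \sum_T s2 T * (\sum_S s1 S * (F C S T)%:R).
Proof.
rewrite /U1 exchange_big /=; apply: eq_bigr => T _; rewrite mulr_sumr.
by apply: eq_bigr => S _; rewrite mulrA (mulrC (s2 T)).
Qed.

Lemma U2_eq (s1 : {set V} -> R) (s2 : {set E} -> R) : \sum_S s1 S = 1 ->
  U2 C s1 s2 = \sum_T s2 T * (#|T|)%:R - U1 C s1 s2.
Proof.
move=> h1; rewrite /U2 /U1.
have -> : \sum_T s2 T * (#|T|)%:R = \sum_S \sum_T s1 S * s2 T * (#|T|)%:R.
  rewrite exchange_big /=; apply: eq_bigr => T _.
  by rewrite -!mulr_suml h1 mul1r.
rewrite -sumrB; apply: eq_bigr => S _; rewrite -sumrB; apply: eq_bigr => T _; by rewrite mulrBr.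
Qed.

Lemma V2_le (t : seq E) b (S : {set V}) : uniq t -> (b <= size t)%N -> (0 < size t)%N ->
  (forall i, #|C i :&: [set x in t]| <= 1)%N ->
  \sum_T cyc_strat R t b T * (F C S T)%:R <= (b * #|S|)%:R / (size t)%:R.
Proof.
move=> ut bt tp hp; rewrite cycE ler_pM2r ?invr_gt0 ?ltr0n //.
rewrite -natr_sum ler_nat; exact: upper_sum.
Qed.

Lemma V1_ge (s : seq V) b (T : {set E}) : uniq s -> (b <= size s)%N -> (0 < size s)%N ->
  (forall e, exists2 i, i \in s & e \in C i) ->
  (b * #|T|)%:R / (size s)%:R <= \sum_S cyc_strat R s b S * (F C S T)%:R.
Proof.
move=> us bs sp hc; rewrite cycE ler_pM2r ?invr_gt0 ?ltr0n //.
rewrite -natr_sum ler_nat; exact: lower_sum.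
Qed.

End Real.

Section Core.
Variables (R : realFieldType) (V E : finType) (C : V -> {set E}).

Definition ET (s2 : {set E} -> R) := \sum_T s2 T * (#|T|)%:R.

Lemma ET_le b (s2 : {set E} -> R) : is_mixed b s2 -> ET s2 <= b%:R.
Proof. by move=> h; apply: (mixed_le h) => A hA; rewrite ler_nat. Qed.

Variables (s : seq V) (t : seq E) (n b1 b2 : nat).
Hypotheses (us : uniq s) (ut : uniq t) (szs : size s = n) (szt : size t = n)
  (hb1 : (b1 < n)%N) (hb2 : (b2 < n)%N) (hb2p : (0 < b2)%N)
  (hc : forall e, exists2 i, i \in s & e \in C i)
  (hp : forall i, (#|C i :&: [set x in t]| <= 1)%N).

Let x : R := b1%:R / n%:R.
Let s1c := cyc_strat R s b1.
Let s2c := cyc_strat R t b2.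

Lemma n_gt0 : (0 < n)%N. Proof. by apply: leq_ltn_trans hb1. Qed.

Lemma x_ge0 : 0 <= x. Proof. by rewrite /x divr_ge0 ?ler0n. Qed.
Lemma x_lt1 : x < 1.
Proof. by rewrite /x ltr_pdivrMr ?ltr0n ?n_gt0 // mul1r ltr_nat. Qed.

Lemma s1c_mixed : is_mixed b1 s1c.
Proof. by apply: cyc_mixed; rewrite szs n_gt0. Qed.
Lemma s2c_mixed : is_mixed b2 s2c.
Proof. by apply: cyc_mixed; rewrite szt n_gt0. Qed.

Lemma ET_s2c : ET s2c = b2%:R.
Proof. by apply: cyc_ET; rewrite ?szt ?n_gt0 // ltnW. Qed.

Lemma F1 (t1 : {set V} -> R) : is_mixed b1 t1 -> U1 C t1 s2c <= x * b2%:R.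
Proof.
move=> ht; rewrite U1_l; apply: (mixed_le ht) => S hS.
apply: le_trans (V2_le R (b:=b2) S ut _ _ hp) _; rewrite ?szt ?n_gt0 ?(ltnW hb2) //.
rewrite /x [X in _ <= X]mulrAC ler_pM2r ?invr_gt0 ?ltr0n ?n_gt0 // -natrM ler_nat mulnC leq_mul2r hS orbT. by [].
Qed.

Lemma F2 (t2 : {set E} -> R) : is_mixed b2 t2 -> x * ET t2 <= U1 C s1c t2.
Proof.
move=> [t0 _]; rewrite U1_r /ET mulr_sumr; apply: ler_sum => T _.
rewrite mulrCA; apply: ler_wpM2l => //.
apply: le_trans (V1_ge R (b:=b1) T us _ _ hc); rewrite ?szs ?n_gt0 ?(ltnW hb1) //.
by rewrite /x natrM mulrAC.
Qed.

Lemma F3 (t2 : {set E} -> R) : is_mixed b2 t2 -> U2 C s1c t2 <= b2%:R * (1 - x).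
Proof.
move=> ht; rewrite U2_eq; last by case: s1c_mixed => _ [].
have h1 := F2 ht; have h2 := ET_le ht; have := x_lt1.
rewrite -/(ET t2) => hx.
have h3 : 0 <= (1 - x) * (b2%:R - ET t2) by apply: mulr_ge0; rewrite subr_ge0 // ltW.
lra.
Qed.

Lemma F4 (t1 : {set V} -> R) : is_mixed b1 t1 -> b2%:R * (1 - x) <= U2 C t1 s2c.
Proof.
move=> ht; rewrite U2_eq; last by case: ht => _ [].
rewrite -/(ET s2c) ET_s2c; have := F1 ht; lra.
Qed.

Lemma core_NE : is_NE C b1 b2 s1c s2c.
Proof.
split; [exact: s1c_mixed | exact: s2c_mixed | |].
- move=> t1 ht; apply: le_trans (F1 ht) _.
  by have := F2 s2c_mixed; rewrite ET_s2c.
- move=> t2 ht; apply: le_trans (F3 ht) _; exact: F4 s1c_mixed.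
Qed.

Lemma core_vals (s1 : {set V} -> R) (s2 : {set E} -> R) : is_NE C b1 b2 s1 s2 ->
  [/\ U1 C s1 s2 = x * b2%:R, U2 C s1 s2 = b2%:R * (1 - x) & rate C s1 s2 = x].
Proof.
case=> m1 m2 d1 d2.
have ha : x * ET s2 <= U1 C s1 s2 := le_trans (F2 m2) (d1 _ s1c_mixed).
have hb : b2%:R * (1 - x) <= U2 C s1 s2 := le_trans (F4 m1) (d2 _ s2c_mixed).
have hU2 : U2 C s1 s2 = ET s2 - U1 C s1 s2 by rewrite U2_eq //; case: m1 => _ [].
have hle := ET_le m2.
have hx := x_lt1.
have hET : ET s2 = b2%:R.
  have h4 : 0 <= (1 - x) * (ET s2 - b2%:R) by lra.
  rewrite pmulr_rge0 ?subr_gt0 // subr_ge0 in h4.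
  by apply/eqP; rewrite eq_le hle h4.
rewrite hET in ha.
have hU1 : U1 C s1 s2 = x * b2%:R by lra.
split => //; first by rewrite hU2 hET hU1; ring.
have hT : forall T : {set E}, s2 T = 0 \/ #|T| = b2.
  have hs0 : \sum_T s2 T * (b2%:R - (#|T|)%:R) = 0.
    rewrite /ET in hET.
    under eq_bigr => T _ do rewrite mulrBr.
    rewrite sumrB hET -mulr_suml; case: m2 => _ [_ ->]; by rewrite mul1r subrr.
  have hnn : forall T0 : {set E}, true -> 0 <= s2 T0 * (b2%:R - (#|T0|)%:R).
    move=> T0 _; case: m2 => s0 [sz _].
    case: (leqP #|T0| b2) => h.
      by apply: mulr_ge0 => //; rewrite subr_ge0 ler_nat.
    by rewrite sz // mul0r.
  move=> T; have := psumr_eq0P hnn hs0 isT.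
  move/(_ T)/eqP; rewrite mulf_eq0 => /orP[/eqP ->|]; first by left.
  by rewrite subr_eq0 eqr_nat => /eqP ->; right.
have -> : rate C s1 s2 = U1 C s1 s2 / b2%:R.
  rewrite /rate /U1 mulr_suml; apply: eq_bigr => S _; rewrite mulr_suml.
  apply: eq_bigr => T _; case: (hT T) => [->|->]; first by rewrite !mulr0 !mul0r.
  by rewrite mulrA.
rewrite hU1 mulfK //; rewrite pnatr_eq0 -lt0n; exact: hb2p.
Qed.

End Core.

Lemma exists_min_cover (V E : finType) (C : V -> {set E}) :
  (forall e : E, exists i : V, e \in C i) -> exists S, min_cover C S.
Proof.
move=> hcov.
have : exists S, is_cover C S /\ #|S| = nstar C.
  rewrite /nstar; apply: (big_ind (fun k => exists S, is_cover C S /\ #|S| = k)).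
  - exists setT; split; last by rewrite cardsT.
    apply/eqP/setP => e; rewrite inE; have [i ei] := hcov e.
    by apply/bigcupP; exists i; rewrite ?inE.
  - move=> a c [Sa [ha ea]] [Sc [hc ec]]; rewrite /minn; case: ifP => _.
      by exists Sa. by exists Sc.
  - by move=> S hS; exists S.
by case=> S [h1 h2]; exists S.
Qed.

Lemma exists_max_packing (V E : finType) (C : V -> {set E}) :
  exists T, max_packing C T.
Proof.
have : exists T, is_packing C T /\ #|T| = mstar C.
  rewrite /mstar; apply: (big_ind (fun k => exists T, is_packing C T /\ #|T| = k)).
  - exists set0; split; last by rewrite cards0.
    by apply/forallP => i; rewrite setI0 cards0.
  - move=> a c [Sa [ha ea]] [Sc [hc ec]]; rewrite /maxn; case: ifP => _.
      by exists Sc. by exists Sa.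
  - by move=> S hS; exists S.
by case=> S [h1 h2]; exists S.
Qed.

Lemma cover_hc (V E : finType) (C : V -> {set E}) (S : {set V}) (s : seq V) :
  is_cover C S -> perm_eq s (enum S) -> forall e, exists2 i, i \in s & e \in C i.
Proof.
move=> /eqP hS ps e.
have : e \in CS C S by rewrite hS inE.
case/bigcupP => i iS ei; exists i => //.
by rewrite (perm_mem ps) mem_enum.
Qed.

Lemma packing_hp (V E : finType) (C : V -> {set E}) (T : {set E}) (t : seq E) :
  is_packing C T -> perm_eq t (enum T) -> forall i, (#|C i :&: [set x in t]| <= 1)%N.
Proof.
move=> /forallP hT pt i.
have -> : [set x in t] = T by apply/setP => x; rewrite inE (perm_mem pt) mem_enum.
exact: hT.
Qed.

Unset Implicit Arguments. Set Strict Implicit.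
Theorem mainTheorem10 (R : realFieldType) (V E : finType) (C : V -> {set E})
  (b1 b2 : nat) :
  (0 < #|V|)%N -> (0 < #|E|)%N -> (forall e : E, exists i : V, e \in C i) ->
  (0 < b1)%N -> (0 < b2)%N ->
  (b1 < nstar C)%N -> (b2 < mstar C)%N -> nstar C = mstar C ->
  (forall (Smin : {set V}) (Tmax : {set E}) (s : seq V) (t : seq E),
      min_cover C Smin -> max_packing C Tmax ->
      perm_eq s (enum Smin) -> perm_eq t (enum Tmax) ->
      is_NE C b1 b2 (cyc_strat R s b1) (cyc_strat R t b2))
  /\
  (forall (s1 : {set V} -> R) (s2 : {set E} -> R),
      is_NE C b1 b2 s1 s2 ->
      [/\ U1 C s1 s2 = (b1 * b2)%:R / (nstar C)%:R,
          U2 C s1 s2 = b2%:R * (1 - b1%:R / (nstar C)%:R) &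
          rate C s1 s2 = b1%:R / (nstar C)%:R]).
Proof.
move=> _ _ hcov _ hb2p hb1 hb2 hnm.
have hb2' : (b2 < nstar C)%N by rewrite hnm.
split.
- move=> Smin Tmax s t [cS eS] [pT eT] ps pt.
  apply: (core_NE R (n := nstar C)).
  + by rewrite (perm_uniq ps) enum_uniq.
  + by rewrite (perm_uniq pt) enum_uniq.
  + by rewrite (perm_size ps) -cardE eS.
  + by rewrite (perm_size pt) -cardE eT hnm.
  + exact: hb1.
  + exact: hb2'.
  + exact: cover_hc cS ps.
  + exact: packing_hp pT pt.
- move=> s1 s2 hNE.
  have [Smin [cS eS]] := exists_min_cover hcov.
  have [Tmax [pT eT]] := exists_max_packing C.
  have ps := perm_refl (enum Smin); have pt := perm_refl (enum Tmax).
  have [h1 h2 h3] := core_vals (n := nstar C) (s := enum Smin) (t := enum Tmax)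
    (enum_uniq _) (enum_uniq _) (etrans (esym (cardE _)) eS)
    (etrans (esym (cardE _)) (etrans eT (esym hnm))) hb1 hb2' hb2p
    (cover_hc cS ps) (packing_hp pT pt) hNE.
  split => //; rewrite h1 natrM; ring.
Qed.
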